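(* Let $G(t,z)$ and $G_n(t)$ be the EGF and row polynomials of the GKP triangle $\left[\begin{array}{cc|c}\alpha,&\beta&\gamma\\ \alpha',&\beta'&\gamma'\end{array}\right]$, and put $\mathcal A(t)=\alpha+\alpha't$, $\mathcal B(t)=(\beta+\beta't)t$, $\mathcal C(t)=\gamma+\gamma't$. (i) $G$ satisfies $[\mathcal A(t)z-1]\,\partial G/\partial z+\mathcal B(t)\,\partial G/\partial t+\mathcal C(t)\,G=0$ with $G(t,0)\equiv1$. (ii) $G_0\equiv1$ and $G_{n+1}(t)=[\mathcal A(t)n+\mathcal C(t)]G_n(t)+\mathcal B(t)G_n'(t)$ for all $n\ge0$. (iii) If $\beta\beta'\neq0$, then with $\hat\alpha=\alpha/\beta$, $\hat\alpha'=-\alpha'/\beta'$, $\hat\gamma=\gamma/\beta$, $\hat\gamma'=-\gamma'/\beta'$ and $D_t=d/dt$, for all $n\ge0$ $$\bigl[t^{1+\hat\alpha}(\beta+\beta't)^{1-\hat\alpha-\hat\alpha'}D_t\bigr]^n\frac{t^{\hat\gamma}}{(\beta+\beta't)^{\hat\gamma+\hat\gamma'}}=\frac{t^{\hat\alpha n+\hat\gamma}\,G_n(t)}{(\beta+\beta't)^{(\hat\alpha+\hat\alpha')n+\hat\gamma+\hat\gamma'}}$$ (as an identity of functions of $t$ on a domain where branches of the powers are fixed consistently).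
   Context: GKP triangle: for complex parameters $\alpha,\beta,\gamma,\alpha',\beta',\gamma'$, the array $T_{n,k}=\left[\begin{array}{cc|c}\alpha,&\beta&\gamma\\ \alpha',&\beta'&\gamma'\end{array}\right]_{n,k}$ ($n,k\in\mathbb Z$) is defined by $T_{0,0}=1$, $T_{n,k}=0$ if $n<0$, $k<0$ or $k>n$, and $T_{n+1,k+1}=[\alpha n+\beta(k+1)+\gamma]\,T_{n,k+1}+[\alpha' n+\beta' k+\gamma']\,T_{n,k}$ for all $n\ge0$ and all integers $k$. Its $n$th row polynomial is $G_n(t)=\sum_{k=0}^n T_{n,k}t^k$ and its EGF is $G(t,z)=\sum_{n\ge0}G_n(t)\,z^n/n!$. *)

(* Defs.v *)
From HB Require Import structures.
From mathcomp Require Import all_boot all_order all_algebra.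
From mathcomp Require Import complex.
From mathcomp Require Import all_classical all_reals all_analysis.
Import Order.TTheory GRing.Theory Num.Theory ComplexField.
Import numFieldNormedType.Exports.
Set Implicit Arguments. Unset Strict Implicit. Unset Printing Implicit Defensive.
Local Open Scope ring_scope.

(* The complex numbers, built as R[i] over a real field R : realType,
   viewed as a numFieldType (hence a normed field, so that [derive1]
   is the complex derivative). *)
Definition Cplx (R : realType) : numFieldType := R[i].

Definition cexp (R : realType) (z : Cplx R) : Cplx R :=
  let: Complex x y := (z : R[i]) in Complex (expR x * cos y) (expR x * sin y).

(* Power w^a computed with a fixed branch L of log w:  w^a := exp(a * L). *)
Definition cpow (R : realType) (L : Cplx R -> Cplx R) (a t : Cplx R) : Cplx R :=
  cexp (a * L t).

Definition log_branch (R : realType) (U : set (Cplx R))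
  (L f : Cplx R -> Cplx R) : Prop :=
  forall t, U t -> cexp (L t) = f t /\ derivable L t 1.

(* GKP triangle entries T_{n,k} for k >= 0 (T_{n,k} = 0 for k < 0 is used in
   the recurrence at k+1 = 0).  Entries with k > n vanish automatically. *)
Fixpoint gkpT (K : fieldType) (a b c a' b' c' : K) (n k : nat) : K :=
  match n with
  | 0 => (k == 0%N)%:R
  | m.+1 => (a * m%:R + b * k%:R + c) * gkpT a b c a' b' c' m k
            + (if k is j.+1 then (a' * m%:R + b' * j%:R + c') * gkpT a b c a' b' c' m j
               else 0)
  end.

Definition gkpG (K : fieldType) (a b c a' b' c' : K) (n : nat) : {poly K} :=
  \sum_(k < n.+1) gkpT a b c a' b' c' n k *: 'X^k.

(* Formal power series in z with coefficients in K[t]:  F = sum_n F n z^n. *)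
Definition fps (K : fieldType) := nat -> {poly K}.

Definition gkpEGF (K : fieldType) (a b c a' b' c' : K) : fps K :=
  fun n => (n`!%:R)^-1 *: gkpG a b c a' b' c' n.

Definition fps_dz (K : fieldType) (F : fps K) : fps K := fun n => n.+1%:R *: F n.+1.
Definition fps_dt (K : fieldType) (F : fps K) : fps K := fun n => deriv (F n).
Definition fps_mulz (K : fieldType) (F : fps K) : fps K :=
  fun n => if n is m.+1 then F m else 0.

(* The operator  f |-> t^{1+ah} (beta+beta' t)^{1-ah-ah'} D_t f, with
   branches L1 of log t and L2 of log (beta+beta' t). *)
Definition gkp_op (R : realType) (L1 L2 : Cplx R -> Cplx R) (ah ah' : Cplx R)
  (f : Cplx R -> Cplx R) : Cplx R -> Cplx R :=
  fun t => cpow L1 (1 + ah) t * cpow L2 (1 - ah - ah') t * derive1 f t.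

(* Main.v *)
Require Import Defs.
From HB Require Import structures.
From mathcomp Require Import all_boot all_order all_algebra.
From mathcomp Require Import complex.
From mathcomp Require Import all_classical all_reals all_analysis.
From mathcomp Require Import ring lra.
Import Order.TTheory GRing.Theory Num.Theory ComplexField.
Import numFieldNormedType.Exports.
Local Open Scope classical_set_scope.
Local Open Scope complex_scope.
Local Open Scope ring_scope.
Section P.
Variables (K : fieldType) (a b c a' b' c' : K).
Local Notation T := (gkpT a b c a' b' c').
Local Notation G := (gkpG a b c a' b' c').

Lemma gkpT0 k : T 0 k = (k == 0)%N%:R.
Proof. Timeout 10 by []. Qed.

Lemma gkpTS n k : T n.+1 k = (a * n%:R + b * k%:R + c) * T n k
   + (if k is j.+1 then (a' * n%:R + b' * j%:R + c') * T n j else 0).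
Proof. Timeout 10 by []. Qed.

Lemma gkpT_gt n k : (n < k)%N -> T n k = 0.
Proof.
elim: n k => [|n ih] k nk.
  Timeout 10 by rewrite gkpT0; case: k nk.
idtac "X". Timeout 10 rewrite gkpTS ih ?(ltn_trans _ nk) // mulr0 add0r.
case: k nk => [|j] // nj.
by rewrite ih // mulr0.
Qed.

Lemma coef_gkpG n k : (G n)`_k = T n k.
Proof.
Timeout 20 rewrite /gkpG -poly_def coef_poly. idtac "Y".
case: ltnP => // h.
by rewrite gkpT_gt.
Qed.

Lemma gkpG0 : G 0 = 1.
Proof.
apply/polyP => k; rewrite coef_gkpG coefC gkpT0; by case: k.
Qed.
Lemma gkpG_rec n :
  G n.+1 = ((a%:P + a'%:P * 'X) * n%:R%:P + (c%:P + c'%:P * 'X)) * G n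
           + ((b%:P + b'%:P * 'X) * 'X) * deriv (G n).
Proof.
have -> : ((a%:P + a'%:P * 'X) * n%:R%:P + (c%:P + c'%:P * 'X)) * G n
           + ((b%:P + b'%:P * 'X) * 'X) * deriv (G n)
   = (a * n%:R + c)%:P * G n + (a' * n%:R + c')%:P * ('X * G n)
     + b%:P * ('X * deriv (G n)) + b'%:P * ('X * ('X * deriv (G n))).
  Timeout 30 rewrite !polyCD !polyCM. idtac "R1". Timeout 60 ring.
idtac "R2".
apply/polyP => k.
Timeout 30 rewrite !coefD !coefCM !coefXM !coef_deriv !coef_gkpG gkpTS.
idtac "R3".
case: k => [|k].
  Timeout 10 rewrite eqxx. Timeout 10 move: (T n 0) => x. idtac "K1". Timeout 10 ring.
idtac "K2".
Timeout 10 rewrite (_ : (k.+1 == 0)%N = false) //.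
idtac "K3".
case: k => [|k].
  Timeout 10 rewrite eqxx. Timeout 10 move: (T n 1) (T n 0) => x y.
  Timeout 10 rewrite /=. Timeout 10 ring.
idtac "K4".
Timeout 10 rewrite (_ : (k.+1 == 0)%N = false) //.
Timeout 10 rewrite [k.+1.-1.+1]/=.
Timeout 10 move: (T n k.+2) (T n k.+1) => x y.
idtac "K5". Timeout 10 rewrite /=. Timeout 30 ring.
Qed.
End P.
Section Q.
Variables (K : numFieldType) (a b c a' b' c' : K).
Local Notation G := (gkpG a b c a' b' c').
Local Notation E := (gkpEGF a b c a' b' c').

Lemma fact_neq0 n : (n`!%:R : K) != 0.
Proof. by rewrite pnatr_eq0 -lt0n fact_gt0. Qed.

Lemma egf_eq n :
  (a%:P + a'%:P * 'X) * fps_mulz (fps_dz E) n - fps_dz E n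
  + ((b%:P + b'%:P * 'X) * 'X) * fps_dt E n + (c%:P + c'%:P * 'X) * E n = 0.
Proof.
rewrite /fps_mulz /fps_dz /fps_dt /gkpEGF.
have e2 : (if n is m.+1 then m.+1%:R *: ((m.+1`!%:R : K)^-1 *: G m.+1) else 0)
          = (n`!%:R : K)^-1 *: (n%:R *: G n).
  case: n => [|m]; first by rewrite scale0r scaler0.
  by rewrite !scalerA [X in X *: _ = _]mulrC.
rewrite e2.
set f := (n`!%:R : K)^-1.
have e1 : n.+1%:R * (n.+1`!%:R : K)^-1 = f.
  rewrite /f factS natrM invfM mulrA divff ?mul1r //.
rewrite (scalerA (n.+1%:R)) e1 derivZ (@gkpG_rec _ a b c a' b' c' n) -!mul_polyC.
Timeout 30 ring.
Qed.

Lemma egf0 : E 0 = 1.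
Proof. by rewrite /gkpEGF gkpG0 invr1 scale1r. Qed.
End Q.
Section S.
Variable R : realType.
Lemma small (f : R -> R) l : is_derive (0:R) 1 f l -> forall e : R, 0 < e ->
  exists2 d : R, 0 < d & forall u, `|u| < d -> `|f u - f 0 - u * l| <= e * `|u|.
Proof.
move=> [df dl] e e0.
have := cvg_toP df dl.
move/cvgrPdist_le => /(_ e e0).
rewrite near_withinE => /nbhs_normP [d d0 Hd].
exists d => // u ud.
have [->|u0] := eqVneq u 0; first by rewrite normr0 mulr0 mul0r subr0 subrr normr0.
have := Hd u; rewrite /= sub0r normrN => /(_ ud u0).
rewrite /= scaler1 addr0 => H.
have -> : f u - f 0 - u * l = - u * (l - u^-1 *: (f u - f 0)).
  rewrite /GRing.scale /=; field; done.
by rewrite normrM normrN mulrC ler_wpM2r.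
Qed.

Lemma key_real (e : R) : 0 < e -> exists2 d : R, 0 < d & forall u v : R,
  `|u| < d -> `|v| < d ->
  `|expR u * cos v - 1 - u| + `|expR u * sin v - v| <= e * (`|u| + `|v|).
Proof.
move=> e0.
pose k := Num.min (e / 8) 1.
have k0 : 0 < k by rewrite lt_min ltr01 andbT divr_gt0.
have k1 : k <= 1 by rewrite ge_min lexx orbT.
have ke : 8 * k <= e.
  have : k <= e / 8 by rewrite ge_min lexx.
  lra.
have [d1 d10 H1] := small _ _ (is_derive_expR (0:R)) k k0.
have [d2 d20 H2] := small _ _ (is_derive_cos (0:R)) k k0.
have [d3 d30 H3] := small _ _ (is_derive_sin (0:R)) k k0.
exists (Num.min (Num.min d1 d2) (Num.min d3 (Num.min 1 (k / 2)))).
  by rewrite !lt_min d10 d20 d30 ltr01 divr_gt0.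
move=> u v; rewrite !lt_min => /and3P[/andP[ud1 ud2] ud3 /andP[ud4 ud5]]
  /and3P[/andP[vd1 vd2] vd3 /andP[vd4 vd5]].
have E := H1 u ud1; rewrite expR0 mulr1 in E.
have C := H2 v vd2; rewrite sin0 oppr0 mulr0 subr0 cos0 in C.
have S := H3 v vd3; rewrite sin0 cos0 subr0 mulr1 in S.
set x := expR u in E *.
have nu := normr_ge0 u; have nv := normr_ge0 v.
have xb : `|x| <= 3.
  have -> : x = (x - 1 - u) + 1 + u by ring.
  apply: (le_trans (ler_normD _ _)); apply: (le_trans (lerD (ler_normD _ _) (lexx _))).
  rewrite normr1.
  nra.
have x1 : `|x - 1| <= k.
  have -> : x - 1 = (x - 1 - u) + u by ring.
  apply: (le_trans (ler_normD _ _)).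
  nra.
have Re : `|x * cos v - 1 - u| <= 3 * (k * `|v|) + k * `|u|.
  have -> : x * cos v - 1 - u = x * (cos v - 1) + (x - 1 - u) by ring.
  apply: (le_trans (ler_normD _ _)); rewrite normrM.
  apply: lerD => //; apply: ler_pM => //.
have Im : `|x * sin v - v| <= 3 * (k * `|v|) + k * `|v|.
  have -> : x * sin v - v = x * (sin v - v) + (x - 1) * v by ring.
  apply: (le_trans (ler_normD _ _)); rewrite !normrM.
  by apply: lerD; apply: ler_pM.
nra.
Qed.
Lemma sqrt_ge_abs (p q : R) : `|p| <= Num.sqrt (p ^+ 2 + q ^+ 2).
Proof. by rewrite -sqrtr_sqr; apply: ler_wsqrtr; rewrite lerDl sqr_ge0. Qed.

Lemma sqrt_le_sum (p q : R) : Num.sqrt (p ^+ 2 + q ^+ 2) <= `|p| + `|q|.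
Proof.
rewrite -(ger0_norm (addr_ge0 (normr_ge0 p) (normr_ge0 q))) -sqrtr_sqr.
apply: ler_wsqrtr; rewrite -[p ^+ 2]real_normK ?num_real // -[q ^+ 2]real_normK ?num_real //.
have := normr_ge0 p; have := normr_ge0 q; nra.
Qed.

Lemma cexp_lim0 : (fun h : Cplx R => h^-1 * (cexp h - 1)) @ 0^' --> (1 : Cplx R).
Proof.
apply/cvgrPdist_le => eps eps0.
have : (0 : R[i]) < eps := eps0.
rewrite ltcE => /andP[/eqP Ie Re0].
have epsE : eps = (complex.Re eps)%:C by case: (eps) Ie => ? ? /= ->.
have [d d0 Hd] := key_real (complex.Re eps / 2) (divr_gt0 Re0 (ltr0Sn _ 1)).
rewrite near_withinE; apply/nbhs_normP; exists (d%:C : Cplx R) => /=; first by rewrite ltcR.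
move=> t; rewrite /= sub0r normrN => td tn0.
have -> : 1 - t^-1 * (cexp t - 1) = - t^-1 * (cexp t - 1 - t).
  by field.
rewrite normrM normrN normfV ler_pdivrMl ?normr_gt0 //.
case: t td tn0 => u v td tn0.
rewrite !normc_def /= in td *.
rewrite ltcR in td.
rewrite {1}epsE -rmorphM /= lecR subr0.
set s := Num.sqrt _ in td *.
have hu := sqrt_ge_abs u v; have hv := sqrt_ge_abs v u.
rewrite addrC -/s in hv; rewrite -/s in hu.
have := Hd u v (le_lt_trans hu td) (le_lt_trans hv td).
have := sqrt_le_sum (expR u * cos v - 1 - u) (expR u * sin v - v).
have : complex.Re eps / 2 * (`|u| + `|v|) <= s * complex.Re eps.
  have E0 : 0 < complex.Re eps by exact: Re0.
  have h2 : `|u| + `|v| <= s * 2 by lra.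
  apply: (le_trans (ler_wpM2l _ h2)); first by rewrite divr_ge0 // ltW.
  have -> : complex.Re eps / 2 * (s * 2) = s * complex.Re eps by field.
  done.
move=> h1 h2 h3; exact: le_trans h2 (le_trans h3 h1).
Qed.

Local Notation cexp := (@cexp R).

Lemma cexpD (x y : Cplx R) : cexp (x + y) = cexp x * cexp y.
Proof.
case: x => x1 x2; case: y => y1 y2.
rewrite /cexp /= expRD cosD sinD.
apply/eqP; rewrite eq_complex /=; apply/andP; split; apply/eqP; ring.
Qed.

Lemma cexp0 : cexp (0 : Cplx R) = 1.
Proof. by rewrite /cexp /= expR0 cos0 sin0 mulr1 mulr0. Qed.

Lemma cexp_neq0 (x : Cplx R) : cexp x != 0.
Proof.
apply/negP => /eqP h; have := cexpD x (- x); rewrite subrr cexp0 h mul0r.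
by move/eqP; rewrite oner_eq0.
Qed.

Lemma cexpN (x : Cplx R) : cexp (- x) = (cexp x)^-1.
Proof.
apply: (@mulfI _ (cexp x)); first exact: cexp_neq0.
by rewrite -cexpD subrr cexp0 divff // cexp_neq0.
Qed.

Lemma is_derive_cexp (z : Cplx R) : is_derive z 1 cexp (cexp z).
Proof.
have E : (fun h : Cplx R => h^-1 *: ((cexp \o shift z) (h *: 1) - cexp z))
       = (fun h => cexp z * (h^-1 * (cexp h - 1))).
  apply/funext => h /=; rewrite /GRing.scale /= mulr1 cexpD; ring.
have L : (fun h : Cplx R => h^-1 *: ((cexp \o shift z) (h *: 1) - cexp z)) @ 0^' --> cexp z.
  rewrite E -[X in _ --> X]mulr1; apply: cvgM; [exact: cvg_cst | exact: cexp_lim0].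
apply: DeriveDef; [exact: cvgP L | exact: cvg_lim L].
Qed.

Lemma is_derive_compC (f g : Cplx R -> Cplx R) (x df dg : Cplx R) :
  is_derive x 1 f df -> is_derive (f x) 1 g dg -> is_derive x 1 (g \o f) (dg * df).
Proof.
move=> [fd fv] [gd gv].
Timeout 20 have dfx := proj1 (derivable1_diffP f x) fd.
idtac "A".
Timeout 20 have dgx := proj1 (derivable1_diffP g (f x)) gd.
idtac "B".
Timeout 20 have dc := differentiable_comp dfx dgx.
idtac "C".
Timeout 20 have dd := proj2 (derivable1_diffP (g \o f) x) dc.
idtac "D".
apply: DeriveDef; first exact: dd.
Timeout 20 rewrite -derive1E.
Timeout 20 rewrite (derive1E' dc).
Timeout 20 rewrite (diff_comp dfx dgx).
Timeout 20 rewrite /=.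
idtac "E".
have e1 : 'd f x 1 = df.
  Timeout 20 have := derive1E' dfx. idtac "e0". Timeout 20 rewrite derive1E fv. by move=> ->.
idtac "F".
have e2 : 'd g (f x) 1 = dg.
  have := derive1E' dgx. rewrite derive1E gv. by move=> ->.
idtac "G".
Timeout 20 transitivity ('d g (f x) df).
  idtac "G1".
  Timeout 20 exact: (congr1 ('d g (f x)) e1).
idtac "I".
Timeout 20 transitivity (df *: 'd g (f x) 1).
  Timeout 20 rewrite -linearZ.
  idtac "H".
  Timeout 20 by rewrite /GRing.scale /= mulr1.
Timeout 20 by rewrite e2 /GRing.scale /= mulrC.
Qed.
Arguments is_derive_compC {f g x df dg}.

Lemma is_derive_hornerC (p : {poly Cplx R}) (x : Cplx R) :
  is_derive x 1 (fun s => p.[s]) (p^`()).[x].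
Proof.
elim/poly_ind: p x => [|p c ih] x.
  have -> : (fun s : Cplx R => (0 : {poly Cplx R}).[s]) = cst 0.
    by apply/funext => s; rewrite horner0.
  rewrite deriv0 horner0; exact: is_derive_cst.
have -> : (fun s : Cplx R => (p * 'X + c%:P).[s]) = (fun s => p.[s]) * id + cst c.
  by apply/funext => s; rewrite !hornerE.
have h1 := is_deriveM (ih x) (is_derive_id x (1 : Cplx R)).
have h2 := is_deriveD h1 (is_derive_cst c x (1 : Cplx R)).
apply: (is_derive_eq h2).
rewrite derivD derivM derivX derivC !hornerE /GRing.scale /=.
ring.
Qed.
Lemma open_near (U : set (Cplx R)) t : open U -> U t -> nbhs t U.
Proof. by rewrite openE => /(_ t). Qed.

Lemma L_deriv (U : set (Cplx R)) (L f : Cplx R -> Cplx R) (t df : Cplx R) :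
  open U -> log_branch U L f -> U t -> is_derive t 1 f df ->
  cexp (L t) * 'D_1 L t = df.
Proof.
move=> oU H Ut Hdf.
have [_ dL] := H t Ut.
have hc := is_derive_compC (derivableP dL) (is_derive_cexp (L t)).
have ne : \forall s \near t, (cexp \o L) s = f s.
  near=> s; apply: (H s _).1; near: s; exact: open_near oU Ut.
have h1 := near_eq_is_derive ne hc.
case: h1 => _ e1; case: Hdf => _ e2.
by rewrite -e1 e2.
Unshelve. all: by end_near.
Qed.
Lemma is_derive_cpow (L : Cplx R -> Cplx R) (a t dl : Cplx R) :
  is_derive t 1 L dl -> is_derive t 1 (cpow L a) (cpow L a t * (a * dl)).
Proof.
move=> hL.
have hz := is_deriveZ a hL.
have h := is_derive_compC hz (is_derive_cexp _).
exact: h.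
Qed.
Arguments is_derive_cpow {L a t dl}.
Arguments L_deriv {U L f t df}.

Lemma cpowN (L : Cplx R -> Cplx R) a t : cpow L (- a) t = (cpow L a t)^-1.
Proof. by rewrite /cpow mulNr cexpN. Qed.

Lemma cpowD (L : Cplx R -> Cplx R) a1 a2 t :
  cpow L (a1 + a2) t = cpow L a1 t * cpow L a2 t.
Proof. by rewrite /cpow mulrDl cexpD. Qed.

Lemma cpow1 (L : Cplx R -> Cplx R) t : cpow L 1 t = cexp (L t).
Proof. by rewrite /cpow mul1r. Qed.

Lemma fM (f g : Cplx R -> Cplx R) s : (f * g) s = f s * g s.
Proof. by []. Qed.

Lemma main3 (a b c a' b' c' : Cplx R) : b != 0 -> b' != 0 ->
  forall (U : set (Cplx R)) (L1 L2 : Cplx R -> Cplx R),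
  open U -> log_branch U L1 id -> log_branch U L2 (fun t => b + b' * t) ->
  forall (n : nat) (t : Cplx R), U t ->
  iter n (gkp_op L1 L2 (a / b) (- (a' / b')))
    (fun s => cpow L1 (c / b) s / cpow L2 (c / b + - (c' / b')) s) t
  = cpow L1 (a / b * n%:R + c / b) t * (gkpG a b c a' b' c' n).[t]
    / cpow L2 ((a / b + - (a' / b')) * n%:R + c / b + - (c' / b')) t.
Proof.
move=> hb hb' U L1 L2 oU H1 H2.
set ah := a / b; set ah' := - (a' / b'); set gh := c / b; set gh' := - (c' / b').
set f0 := (fun s => _).
pose P (n : nat) := ah * n%:R + gh.
pose Q (n : nat) := (ah + ah') * n%:R + gh + gh'.
pose F (n : nat) := (cpow L1 (P n) * (fun s => (gkpG a b c a' b' c' n).[s]))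
   * cpow L2 (- Q n).
suff HF : forall n t, U t -> iter n (gkp_op L1 L2 ah ah') f0 t = F n t.
  move=> n t Ut; rewrite HF //.
  Timeout 20 rewrite /F !fM.
  by rewrite cpowN.
elim=> [|n IH] t Ut.
  by rewrite /= /f0 /F !fM gkpG0 hornerC mulr1 cpowN /P /Q !mulr0 !add0r.
Timeout 20 rewrite iterS /gkp_op derive1E.
have ne : \forall s \near t, iter n (gkp_op L1 L2 ah ah') f0 s = F n s.
  near=> s; apply: IH; near: s; exact: open_near oU Ut.
Timeout 20 rewrite (near_eq_derive _ ne).
idtac "M1".
have [c1 dL1] := H1 t Ut.
have [c2 dL2] := H2 t Ut.
have D1 := L_deriv oU H1 Ut (is_derive_id t 1).
have hlin : is_derive t 1 (fun s => b + b' * s) b'.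
  have h := is_deriveD (is_derive_cst b t 1) (is_deriveZ b' (is_derive_id t 1)).
  apply: (is_derive_eq h).
  by rewrite add0r /GRing.scale /= mulr1.
have D2 := L_deriv oU H2 Ut hlin.
idtac "M2".
have h1 := is_deriveM (is_derive_cpow (a:=P n) (derivableP dL1))
   (is_derive_hornerC (gkpG a b c a' b' c' n) t).
have h2 := is_deriveM h1 (is_derive_cpow (a:=- Q n) (derivableP dL2)).
case: h2 => _ e.
Timeout 20 rewrite e.
idtac "M3".
rewrite fM /F !fM (@gkpG_rec _ a b c a' b' c' n) !hornerE.
idtac "M4".
rewrite (cpowD L1 1 ah t) cpow1 c1.
have -> : 1 - ah - ah' = 1 + - (ah + ah') by ring.
rewrite (cpowD L2 1 (- (ah + ah')) t) cpow1 c2.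
have -> : P n.+1 = P n + ah by rewrite /P; ring.
rewrite (cpowD L1 (P n) ah t).
have -> : - Q n.+1 = - Q n + - (ah + ah') by rewrite /Q; ring.
rewrite (cpowD L2 (- Q n) (- (ah + ah')) t).
idtac "M5".
set u1 := cpow L1 (P n) t. set w1 := cpow L1 ah t.
set u2 := cpow L2 (- Q n) t. set w2 := cpow L2 (- (ah + ah')) t.
set G0 := (gkpG a b c a' b' c' n).[t].
set G1 := (deriv (gkpG a b c a' b' c' n)).[t].
set d1 := 'D_1 L1 t. set d2 := 'D_1 L2 t.
have tn0 : t != 0 by have := cexp_neq0 (L1 t); rewrite c1.
have bn0 : b + b' * t != 0 by rewrite -c2 cexp_neq0.
rewrite c1 in D1; rewrite c2 in D2.
have ed1 : d1 = t^-1 by apply: (mulfI tn0); rewrite D1 divff.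
have ed2 : d2 = b' / (b + b' * t).
  by apply: (mulfI bn0); rewrite D2 mulrCA divff // mulr1.
rewrite ed1 ed2 /GRing.scale /= /P /Q /ah /ah' /gh /gh'.
idtac "M6".
Timeout 60 field.
by rewrite tn0 hb bn0 hb'.
Unshelve. all: by end_near.
Qed.
End S.

Theorem mainTheorem2 (R : realType) (a b c a' b' c' : Cplx R) :
  let G := gkpEGF a b c a' b' c' in
  let Gn := gkpG a b c a' b' c' in
  let A : {poly Cplx R} := a%:P + a'%:P * 'X in
  let B : {poly Cplx R} := (b%:P + b'%:P * 'X) * 'X in
  let Cp : {poly Cplx R} := c%:P + c'%:P * 'X in
  (* (i) [A z - 1] dG/dz + B dG/dt + C G = 0, and G(t,0) = 1 *)
  ((forall n, A * fps_mulz (fps_dz G) n - fps_dz G n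
              + B * fps_dt G n + Cp * G n = 0)
   /\ G 0%N = 1)
  (* (ii) *)
  /\ (Gn 0%N = 1 /\
      forall n : nat, Gn n.+1 = (A * n%:R%:P + Cp) * Gn n + B * deriv (Gn n))
  (* (iii) *)
  /\ (b != 0 -> b' != 0 ->
      let ah := a / b in
      let ah' := - (a' / b') in
      let gh := c / b in
      let gh' := - (c' / b') in
      forall (U : set (Cplx R)) (L1 L2 : Cplx R -> Cplx R),
        open U ->
        log_branch U L1 id ->
        log_branch U L2 (fun t => b + b' * t) ->
        forall (n : nat) (t : Cplx R), U t ->
          iter n (gkp_op L1 L2 ah ah')
               (fun s => cpow L1 gh s / cpow L2 (gh + gh') s) t
          = cpow L1 (ah * n%:R + gh) t * (Gn n).[t]
            / cpow L2 ((ah + ah') * n%:R + gh + gh') t).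
Proof.
move=> G Gn A B Cp.
split; [split|split; [split|]].
- move=> n; exact: egf_eq.
- exact: egf0.
- exact: gkpG0.
- move=> n; exact: gkpG_rec.
- move=> hb hb' ah ah' gh gh' U L1 L2 oU H1 H2 n t Ut.
  exact: (@main3 R a b c a' b' c' hb hb' U L1 L2 oU H1 H2 n t Ut).
Qed.
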